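(* Let $\mathcal{G}_1=\{(Q,\lambda)\in\mathsf{Sp}(n-1,\omega)\times\mathbb{R}_+:\dim\ker(Q-\lambda\,\mathrm{Id})=1\}$ and $\mathcal{G}_0=\{(Q,1)\in\mathcal{G}_1\}$. Then the projection $\pi\colon\mathcal{G}_1\to\mathbb{R}$, $\pi(Q,\lambda)=\lambda$, is a submersion around $\mathcal{G}_0$.
   Context: $\omega$ is the standard symplectic form on $\mathbb{R}^{2(n-1)}$, $\mathsf{Sp}(n-1,\omega)$ the real symplectic group, $\mathbb{R}_+=(0,\infty)$. $\mathcal{G}_1$ is a smooth hypersurface of the open set $\mathcal{G}=\{(Q,\lambda):\dim\ker(Q-\lambda\,\mathrm{Id})\le1\}\subseteq\mathsf{Sp}(n-1,\omega)\times\mathbb{R}_+$, being the zero set of $(Q,\lambda)\mapsto\det(Q-\lambda\,\mathrm{Id})$, which is a submersion near $\mathcal{G}_1$. *)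

(* Defs.v *)
From HB Require Import structures.
From mathcomp Require Import all_boot all_order all_algebra.
From mathcomp Require Import all_classical all_reals all_analysis.
Set Implicit Arguments. Unset Strict Implicit. Unset Printing Implicit Defensive.
Import Order.TTheory GRing.Theory Num.Theory.
Import numFieldNormedType.Exports.
Local Open Scope ring_scope.
Local Open Scope classical_set_scope.

(* Matrices on R^{2m}, m = n-1, written as R^m (+) R^m. *)

(* Standard symplectic form  omega(u,v) = u^T J v,  J = [[0, I],[-I, 0]]. *)
Definition Jstd (R : realType) (m : nat) : 'M[R]_(m + m) :=
  block_mx 0 1%:M (- 1%:M) 0.

Definition symplectic (R : realType) (m : nat) (Q : 'M[R]_(m + m)) : Prop :=
  Q^T *m Jstd R m *m Q = Jstd R m.

(* dim ker (Q - lambda Id), kernel acting on column vectors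
   (= row kernel of the transpose). *)
Definition dimker_shift (R : realType) (m : nat) (Q : 'M[R]_(m + m)) (l : R) : nat :=
  \rank (kermx (Q - l%:M)^T).

Definition G1 (R : realType) (m : nat) : set ('M[R]_(m + m) * R) :=
  [set p | symplectic p.1 /\ 0 < p.2 /\ dimker_shift p.1 p.2 = 1%N].

Definition G0 (R : realType) (m : nat) : set ('M[R]_(m + m) * R) :=
  [set p | @G1 R m p /\ p.2 = 1].

(* The differential at p of the projection pi(Q,lambda) = lambda restricted
   to G_1 is surjective onto R: some tangent vector of G_1 at p (velocity of
   a curve in G_1 through p, differentiable at 0) has nonzero lambda-component. *)
Definition proj_submersive_at (R : realType) (m : nat) (p : 'M[R]_(m + m) * R) : Prop :=
  exists (gQ : R -> 'M[R]_(m + m)) (gl : R -> R),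
    [/\ gQ 0 = p.1 /\ gl 0 = p.2,
        derivable gQ 0 1, derivable gl 0 1,
        (\forall t \near 0, @G1 R m (gQ t, gl t)) &
        'D_1 gl 0 != 0].

(* Main.v *)
Require Import Defs.
From HB Require Import structures.
From mathcomp Require Import all_boot all_order all_algebra.
From mathcomp Require Import all_classical all_reals all_analysis.
From mathcomp Require Import ring lra zify.
Import Order.TTheory GRing.Theory Num.Theory.
Import numFieldNormedType.Exports.
Set Implicit Arguments. Unset Strict Implicit. Unset Printing Implicit Defensive.
Local Open Scope ring_scope.
Local Open Scope classical_set_scope.

Section Alg.
Variables (R : realType) (m : nat).
Local Notation J := (Jstd R m).
Local Notation N := (m + m)%N.

Lemma JtrN : J^T = - J.
Proof. by rewrite /Jstd tr_block_mx !trmx0 trmx1 linearN /= trmx1 opp_block_mx oppr0 opprK. Qed.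

Lemma JJ : J *m J = - 1%:M.
Proof.
rewrite /Jstd mulmx_block !mulmx0 !mul0mx !mulmx1 !mulmxN !mulmx1 !add0r !addr0.
by rewrite scalar_mx_block opp_block_mx oppr0.
Qed.

Lemma JTJ : J^T *m J = 1%:M.
Proof. by rewrite JtrN mulNmx JJ opprK. Qed.

Lemma JJT : J *m J^T = 1%:M.
Proof. by rewrite JtrN mulmxN JJ opprK. Qed.

Lemma tr11 (S : 'M[R]_1) : S^T = S.
Proof. by rewrite [S]mx11_scalar tr_scalar_mx. Qed.

Lemma quad0 (x : 'cV[R]_N) : x^T *m J *m x = 0.
Proof.
set S := x^T *m J *m x.
have h : S^T = - S.
  by rewrite /S !trmx_mul trmxK JtrN mulNmx mulmxN mulmxA.
rewrite tr11 in h.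
apply/matrixP => i j; rewrite !ord1.
have := congr1 (fun M : 'M[R]_1 => M 0 0) h; rewrite /= [in RHS]mxE => h'.
rewrite [in RHS]mxE; lra.
Qed.

Lemma symplectic_mul (A B : 'M[R]_N) :
  symplectic A -> symplectic B -> symplectic (A *m B).
Proof.
rewrite /symplectic => hA hB.
by rewrite trmx_mul !mulmxA -(mulmxA B^T) -(mulmxA B^T) hA hB.
Qed.

Lemma outer3 (x y z w : 'cV[R]_N) (K K' : 'M[R]_N) :
  x *m y^T *m K *m (z *m w^T *m K') = x *m (y^T *m K *m z) *m w^T *m K'.
Proof. by rewrite !mulmxA. Qed.

Definition Em (u v : 'cV[R]_N) := u *m v^T *m J.
Definition Fm (u v : 'cV[R]_N) := v *m u^T *m J^T.

Lemma A_sympl (u v : 'cV[R]_N) a b :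
  v^T *m J *m u = 1%:M -> (1 + a) * (1 + b) = 1 ->
  symplectic (1%:M + a *: Fm u v + b *: Em u v).
Proof.
move=> hvu hab.
have huv : u^T *m J^T *m v = 1%:M.
  by rewrite -[LHS]tr11 !trmx_mul !trmxK mulmxA hvu.
have huu : u^T *m J^T *m u = 0 by rewrite JtrN mulmxN mulNmx quad0 oppr0.
have hvv := quad0 v.
have EE : Em u v *m Em u v = Em u v.
  by rewrite /Em outer3 hvu mulmx1.
have FF : Fm u v *m Fm u v = Fm u v.
  by rewrite /Fm outer3 huv mulmx1.
have EF : Em u v *m Fm u v = 0.
  by rewrite /Em /Fm outer3 hvv mulmx0 !mul0mx.
have FE : Fm u v *m Em u v = 0.
  by rewrite /Em /Fm outer3 huu mulmx0 !mul0mx.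
have FtJ : (Fm u v)^T *m J = J *m Em u v.
  by rewrite /Fm /Em !trmx_mul !trmxK !mulmxA.
have EtJ : (Em u v)^T *m J = J *m Fm u v.
  rewrite /Fm /Em !trmx_mul !trmxK JtrN !mulmxA mulmxN mulNmx.
  by rewrite !mulNmx.
have step1 : (1%:M + a *: Fm u v + b *: Em u v)^T *m J
             = J *m (1%:M + a *: Em u v + b *: Fm u v).
  by rewrite !linearD !linearZ /= trmx1 !mulmxDl ?mulmxDr mul1mx mulmx1
    -!scalemxAl FtJ EtJ.
have step2 : (1%:M + a *: Em u v + b *: Fm u v) *m (1%:M + a *: Fm u v + b *: Em u v)
             = 1%:M.
  rewrite !mulmxDl !mulmxDr !mul1mx !mulmx1 -!scalemxAl -!scalemxAr !scalerA
    EE FF EF FE !scaler0 !addr0.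
  have h : a + b + a * b = 0 by lra.
  clear -h.
  move: (Em u v) (Fm u v) => E F.
  apply/matrixP => i j; rewrite !mxE.
  rewrite -[RHS]addr0 -(mul0r (E i j + F i j)) -h; ring.
by rewrite /symplectic step1 -mulmxA step2 mulmx1.
Qed.

End Alg.
Section Ana.
Variables (R : realType).

Lemma cvg_bsum {T} (F : set_system T) {FF : Filter F} (I : Type) (r : seq I)
  (P : pred I) (G : I -> T -> R) (g : I -> R) :
  (forall i, G i @ F --> g i) ->
  (fun t => \sum_(i <- r | P i) G i t) @ F --> \sum_(i <- r | P i) g i.
Proof.
move=> hG; elim: r => [|a r IH].
  rewrite big_nil; under eq_fun do rewrite big_nil; exact: cvg_cst.
rewrite big_cons; under eq_fun do rewrite big_cons.
case: (P a) => //; exact: cvgD.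
Qed.

Lemma cvg_bprod {T} (F : set_system T) {FF : Filter F} (I : Type) (r : seq I)
  (P : pred I) (G : I -> T -> R) (g : I -> R) :
  (forall i, G i @ F --> g i) ->
  (fun t => \prod_(i <- r | P i) G i t) @ F --> \prod_(i <- r | P i) g i.
Proof.
move=> hG; elim: r => [|a r IH].
  rewrite big_nil; under eq_fun do rewrite big_nil; exact: cvg_cst.
rewrite big_cons; under eq_fun do rewrite big_cons.
case: (P a) => //; exact: cvgM.
Qed.

Lemma cvg_det {T} (F : set_system T) {FF : Filter F} k (M : T -> 'M[R]_k) (M0 : 'M[R]_k) :
  (forall i j, (fun t => M t i j) @ F --> M0 i j) ->
  (fun t => \det (M t)) @ F --> \det M0.
Proof.
move=> hM; rewrite /determinant; apply: cvg_bsum => s.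
apply: cvgM; first exact: cvg_cst.
by apply: cvg_bprod => i.
Qed.

Lemma cvg_mulmx {T} (F : set_system T) {FF : Filter F} p q r (M : T -> 'M[R]_(p, q)) (M0 : 'M[R]_(p, q))
  (X : 'M[R]_(r, p)) :
  (forall i j, (fun t => M t i j) @ F --> M0 i j) ->
  (forall i j, (fun t => (X *m M t) i j) @ F --> (X *m M0) i j).
Proof.
move=> hM i j; under eq_fun do rewrite mxE; rewrite mxE.
apply: cvg_bsum => l; apply: cvgM; [exact: cvg_cst|exact: hM].
Qed.

Lemma cvg_mulmxr {T} (F : set_system T) {FF : Filter F} p q r (M : T -> 'M[R]_(p, q)) (M0 : 'M[R]_(p, q))
  (Y : 'M[R]_(q, r)) :
  (forall i j, (fun t => M t i j) @ F --> M0 i j) ->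
  (forall i j, (fun t => (M t *m Y) i j) @ F --> (M0 *m Y) i j).
Proof.
move=> hM i j; under eq_fun do rewrite mxE; rewrite mxE.
apply: cvg_bsum => l; apply: cvgM; [exact: hM|exact: cvg_cst].
Qed.

Lemma rank_near {T} (F : set_system T) {FF : ProperFilter F} p q (M : T -> 'M[R]_(p, q)) (M0 : 'M[R]_(p, q)) :
  (forall i j, (fun t => M t i j) @ F --> M0 i j) ->
  \forall t \near F, (\rank M0 <= \rank (M t))%N.
Proof.
move=> hM.
set r := \rank M0.
pose X : 'M[R]_(r, p) := pid_mx r *m invmx (col_ebase M0).
pose Y : 'M[R]_(q, r) := invmx (row_ebase M0) *m pid_mx r.
have hXY : X *m M0 *m Y = 1%:M.
  rewrite /X /Y -{2}(mulmx_ebase M0) !mulmxA mulmxKV ?col_ebase_unit //.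
  rewrite -!mulmxA mulKVmx ?row_ebase_unit // !mulmxA !mul_pid_mx.
  rewrite /r minnn (minn_idPr (rank_leq_row _)) minnn (minn_idPr (rank_leq_col _)).
  exact: pid_mx_1.
have hc : \det (X *m M t *m Y) @[t --> F] --> \det (X *m M0 *m Y).
  by apply: cvg_det; apply: cvg_mulmxr; apply: cvg_mulmx.
rewrite hXY det1 in hc.
have h1 := cvgr_neq0 (1:R) hc (oner_neq0 R).
near=> t.
have ht : \det (X *m M t *m Y) != 0 by near: t; exact: h1.
have hu : X *m M t *m Y \in unitmx by rewrite unitmxE unitfE.
have := mxrank_unit hu.
move=> <-; apply: (leq_trans (mxrankM_maxl _ _)); exact: mxrankM_maxr.
Unshelve. all: by end_near.
Qed.

Lemma cvg_aff {T} (F : set_system T) {FF : Filter F} p q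
  (C0 C1 C2 C3 : 'M[R]_(p, q)) (f1 f2 f3 : T -> R) (a1 a2 a3 : R) :
  f1 @ F --> a1 -> f2 @ F --> a2 -> f3 @ F --> a3 ->
  forall i j, (fun t => (C0 + f1 t *: C1 + f2 t *: C2 + f3 t *: C3) i j) @ F -->
     (C0 + a1 *: C1 + a2 *: C2 + a3 *: C3) i j.
Proof.
move=> h1 h2 h3 i j; under eq_fun do rewrite !mxE; rewrite !mxE.
apply: cvgD; [apply: cvgD; [apply: cvgD|]|].
- exact: cvg_cst.
- by apply: cvgM => //; exact: cvg_cst.
- by apply: cvgM => //; exact: cvg_cst.
- by apply: cvgM => //; exact: cvg_cst.
Qed.

End Ana.

Section Main.
Variables (R : realType) (m : nat).
Local Notation J := (Jstd R m).
Local Notation N := (m + m)%N.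

Lemma exists_u (v : 'cV[R]_N) : v != 0 -> exists u, v^T *m J *m u = 1%:M.
Proof.
move=> v0.
set c := (v^T *m v) 0 0.
have c0 : c != 0.
  apply/negP => /eqP hc; move/negP: v0; apply; apply/eqP/matrixP => i j.
  rewrite !ord1 mxE.
  have hs : \sum_k v k 0 ^+ 2 = 0.
    by rewrite -[RHS]hc /c mxE; apply: eq_bigr => k _; rewrite mxE expr2.
  have := psumr_eq0P (fun k _ => sqr_ge0 (v k 0)) hs (i:=i) isT.
  by move/eqP; rewrite sqrf_eq0 => /eqP.
exists (c^-1 *: (J^T *m v)).
rewrite -scalemxAr mulmxA -(mulmxA v^T) JJT mulmx1 [v^T *m v]mx11_scalar -/c.
by rewrite scale_scalar_mx mulVf.
Qed.

Lemma A_ker (u v : 'cV[R]_N) a b :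
  v^T *m J *m u = 1%:M ->
  (1%:M + a *: Fm u v + b *: Em u v) *m v = (1 + a) *: v.
Proof.
move=> hvu.
have huv : u^T *m J^T *m v = 1%:M.
  by rewrite -[LHS]tr11 !trmx_mul !trmxK mulmxA hvu.
rewrite !mulmxDl mul1mx -!scalemxAl /Fm /Em -!(mulmxA v) -!(mulmxA u) huv quad0.
by rewrite mulmx1 mulmx0 scaler0 addr0 scalerDl scale1r.
Qed.

Lemma main_pt (Q : 'M[R]_N) (l : R) :
  symplectic Q -> 0 < l -> dimker_shift Q l = 1%N -> proj_submersive_at (Q, l).
Proof.
move=> hs hl hk.
set M0 := Q - l%:M.
have [v [v0 hv]] : exists v : 'cV[R]_N, v != 0 /\ Q *m v = l *: v.
  set K := kermx M0^T.
  have K0 : K != 0.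
    by apply/eqP => K0; move: hk; rewrite /dimker_shift -/M0 -/K K0 mxrank0.
  set w := nz_row K.
  have w0 : w != 0 by rewrite nz_row_eq0.
  have hw : w *m M0^T = 0 by apply/eqP; rewrite -sub_kermx; exact: nz_row_sub.
  exists w^T; split.
    by apply: contraNneq w0 => h; rewrite -[w]trmxK h trmx0.
  apply/eqP; rewrite -subr_eq0 -mul_scalar_mx -mulmxBl -/M0.
  by rewrite -[M0 *m _]trmxK trmx_mul trmxK hw trmx0.
have [u hvu] := exists_u v0.
set F := Fm u v; set E := Em u v.
pose b := fun t : R => (1 + t)^-1 - 1.
pose gQ := fun t : R => Q + t *: (Q *m F) + b t *: (Q *m E).
pose gl := fun t : R => l + l * t.
have b0 : b 0 = 0 by rewrite /b addr0 invr1 subrr.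
have db : derivable b 0 1.
  apply: derivableB; last exact: derivable_cst.
  have h1 : (fun x : R => 1 + x) 0 != 0 by rewrite /= addr0 oner_neq0.
  have h2 : derivable (fun x : R => 1 + x) 0 1.
    have -> : (fun x : R => 1 + x) = cst 1 + id by apply/funext.
    exact: (@derivableD R R R (cst (1:R)) id 0 1 (derivable_cst (1:R) (0:R) (1:R)) (@derivable_id R R 0 1)).
  exact: (derivableV h1 h2).
have dgl : is_derive (0:R) (1:R) gl (0 + l *: 1).
  have -> : gl = cst l + l *: id by apply/funext => t.
  by apply: is_deriveD.
have hgQ : forall t, 1 + t != 0 -> gQ t = Q *m (1%:M + t *: F + b t *: E).
  move=> t t0; rewrite /gQ !mulmxDr mulmx1 -!scalemxAr //.
have hab : forall t, 1 + t != 0 -> (1 + t) * (1 + b t) = 1.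
  by move=> t t0; rewrite /b [1 + (_ - 1)]addrC subrK mulfV.
exists gQ, gl; split.
- by rewrite /gQ /gl b0 !scale0r !addr0 mulr0 addr0.
- apply/derivable1_diffP.
  have -> : gQ = cst Q + (fun t => t *: (Q *m F)) + (fun t => b t *: (Q *m E))
    by apply/funext => t.
  apply: differentiableD; first apply: differentiableD.
  + exact: differentiable_cst.
  + by apply: differentiableZl; apply/derivable1_diffP; exact: derivable_id.
  + by apply: differentiableZl; apply/derivable1_diffP.
- by case: dgl.
- have ct : (fun t : R => t) @ (0:R) --> (0:R) by exact: cvg_id.
  have cb : b @ (0:R) --> b 0.
    by apply: differentiable_continuous; apply/derivable1_diffP.
  have cgl : (fun t => - gl t) @ (0:R) --> - gl 0.
    apply: cvgN; apply: differentiable_continuous; apply/derivable1_diffP.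
    by case: dgl.
  have hr : \forall t \near (0:R),
      (\rank (Q + 0 *: (Q *m F) + b 0 *: (Q *m E) + - gl 0 *: 1%:M)%R <=
       \rank (Q + t *: (Q *m F) + b t *: (Q *m E) + - gl t *: 1%:M)%R)%N.
    refine (@rank_near R R (nbhs (0:R)) _ N N _ _ _).
    exact: (@cvg_aff R R (nbhs (0:R)) _ N N Q (Q *m F) (Q *m E) 1%:M _ _ _ _ _ _ ct cb cgl).
  have h1 : \forall t \near (0:R), `|t| < 1 by apply: nbhs0_lt.
  rewrite /dimker_shift mxrank_ker mxrank_tr in hk.
  have eM0 : Q + 0 *: (Q *m F) + b 0 *: (Q *m E) + - gl 0 *: 1%:M = M0.
    by rewrite b0 !scale0r !addr0 /gl mulr0 addr0 scaleNr scalemx1.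
  rewrite eM0 in hr.
  near=> t.
  have ht1 : `|t| < 1 by near: t.
  have hrt : (\rank M0 <= \rank (Q + t *: (Q *m F) + b t *: (Q *m E) + - gl t *: 1%:M)%R)%N.
    by near: t.
  have t0 : 1 + t != 0.
    move/ltr_normlP: ht1 => [ht1a _]; rewrite gt_eqF //; lra.
  have ht2 : -1 < t by move/ltr_normlP: ht1 => [ht1a _]; lra.
  have Mt : Q + t *: (Q *m F) + b t *: (Q *m E) + - gl t *: 1%:M = gQ t - (gl t)%:M.
    by rewrite scaleNr scalemx1.
  rewrite Mt in hrt.
  split; [|split].
  - rewrite /= hgQ //; exact: symplectic_mul hs (A_sympl hvu (hab t t0)).
  - rewrite /= /gl; nra.
  - rewrite /= /dimker_shift.
    have hker : (v^T <= kermx (gQ t - (gl t)%:M)^T)%MS.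
      rewrite sub_kermx -trmx_mul mulmxBl hgQ // -mulmxA A_ker // -scalemxAr hv scalerA.
      rewrite mul_scalar_mx.
      have -> : (1 + t) * l = gl t by rewrite /gl; ring.
      by rewrite subrr trmx0.
    have vT0 : (v^T != 0) by apply: contraNneq v0 => h; rewrite -[v]trmxK h trmx0.
    have := mxrankS hker; rewrite rank_rV vT0.
    rewrite !mxrank_ker !mxrank_tr.
    move: hk hrt; rewrite -/M0.
    set a := \rank M0; set c := \rank (gQ t - (gl t)%:M).
    move=> hk hrt h; lia.
- rewrite derive_val add0r; change (l * 1 != 0).
  by rewrite mulr1 gt_eqF.
Unshelve. all: by end_near.
Qed.

End Main.

Theorem lemmaA6 (R : realType) (n : nat) :
  forall p0 : 'M[R]_((n - 1) + (n - 1)) * R, @G0 R (n - 1) p0 ->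
    \forall p \near p0, @G1 R (n - 1) p -> @proj_submersive_at R (n - 1) p.
Proof.
move=> p0 _; apply: (@nearW _ _ _ (nbhs_filter p0)) => -[Q l] [hs [hl hk]].
exact: main_pt.
Qed.
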